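(* Let $N\ge2$, $V_{th}>0$, and consider a multi-layer feedback spiking neural network with discrete integrate-and-fire neurons organized in layers $l=1,\dots,N$, with weight matrices $\mathbf{F}^1$ (input to layer 1), $\mathbf{F}^{l}$ (layer $l-1$ to layer $l$, $l=2,\dots,N$), feedback matrix $\mathbf{W}^1$ (layer $N$ to layer 1), and biases $\mathbf{b}^l$. With $\mathbf{u}^l[0]=\mathbf{0}$, $\mathbf{s}^l[0]=\mathbf{0}$, the dynamics are $$\mathbf{u}^1[t+1]=\mathbf{u}^1[t]+\mathbf{W}^1\mathbf{s}^N[t]+\mathbf{F}^1\mathbf{x}[t]+\mathbf{b}^1-V_{th}\mathbf{s}^1[t+1],$$ $$\mathbf{u}^{l+1}[t+1]=\mathbf{u}^{l+1}[t]+\mathbf{F}^{l+1}\mathbf{s}^l[t+1]+\mathbf{b}^{l+1}-V_{th}\mathbf{s}^{l+1}[t+1],\quad l=1,\dots,N-1,$$ where each spike $\mathbf{s}^l[t+1]$ equals $H(\text{pre-reset potential}-V_{th})$ elementwise ($H$ the Heaviside step). Define $\mathbf{a}^l[t]=\frac1t\sum_{\tau=1}^t\mathbf{s}^l[\tau]$ and $\overline{\mathbf{x}}[t]=\frac1{t+1}\sum_{\tau=0}^t\mathbf{x}[\tau]$, and let ${\mathbf{u}^l}^+[t]$ denote the parts of the membrane potentials for which $$\mathbf{a}^1[t+1]=\sigma\!\left(\tfrac1{V_{th}}\left(\tfrac{t}{t+1}\mathbf{W}^1\mathbf{a}^N[t]+\mathbf{F}^1\overline{\mathbf{x}}[t]+\mathbf{b}^1-\tfrac{{\mathbf{u}^1}^+[t+1]}{t+1}\right)\right),$$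 $$\mathbf{a}^{l+1}[t+1]=\sigma\!\left(\tfrac1{V_{th}}\left(\mathbf{F}^{l+1}\mathbf{a}^l[t+1]+\mathbf{b}^{l+1}-\tfrac{{\mathbf{u}^{l+1}}^+[t+1]}{t+1}\right)\right),\ l=1,\dots,N-1,$$ hold. Suppose $\overline{\mathbf{x}}[t]\to\mathbf{x}^*$, and there exist constants $c$ and $\gamma<1$ such that $|{\mathbf{u}^l_i}^+[t]|\le c$ for all $i,l,t$ and $\|\mathbf{W}^1\|_2\|\mathbf{F}^N\|_2\cdots\|\mathbf{F}^2\|_2\le\gamma V_{th}^N$. Then $\mathbf{a}^l[t]\to{\mathbf{a}^l}^*$ for every $l$, where ${\mathbf{a}^1}^*=f_1\big(f_N\circ\cdots\circ f_2({\mathbf{a}^1}^* ),\mathbf{x}^*\big)$ and ${\mathbf{a}^{l+1}}^*=f_{l+1}({\mathbf{a}^l}^* )$, with $f_1(\mathbf{a},\mathbf{x})=\sigma\big(\frac1{V_{th}}(\mathbf{W}^1\mathbf{a}+\mathbf{F}^1\mathbf{x}+\mathbf{b}^1)\big)$ and $f_l(\mathbf{a})=\sigma\big(\frac1{V_{th}}(\mathbf{F}^l\mathbf{a}+\mathbf{b}^l)\big)$ for $l\ge2$.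
   Context: $\sigma$ is applied elementwise with $\sigma(x)=1$ for $x>1$, $\sigma(x)=x$ for $0\le x\le1$, $\sigma(x)=0$ for $x<0$. $\|\cdot\|_2$ is the spectral norm. In the paper each membrane potential is decomposed as $\mathbf{u}^l_i[t]={\mathbf{u}^l_i}^-[t]+{\mathbf{u}^l_i}^+[t]$, the first term collecting the accumulated negative and excess positive terms (those clipped by $\sigma$), and ${\mathbf{u}^l}^+[t]$ being the remainder, so that the displayed relations hold. *)

(* Defs.v *)
From HB Require Import structures.
From mathcomp Require Import all_boot all_order all_algebra.
From mathcomp Require Import all_classical all_reals all_analysis.
Set Implicit Arguments. Unset Strict Implicit. Unset Printing Implicit Defensive.
Import Order.TTheory GRing.Theory Num.Theory.
Local Open Scope ring_scope.
Local Open Scope classical_set_scope.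

Definition sigma {R : realType} (z : R) : R :=
  if 1 < z then 1 else if z < 0 then 0 else z.

Definition heaviside {R : realType} (z : R) : R := if 0 <= z then 1 else 0.

Definition vnorm2 {R : realType} {n : nat} (v : 'cV[R]_n) : R :=
  Num.sqrt (\sum_(i < n) (v i 0) ^+ 2).

Definition spec_norm {R : realType} {m n : nat} (A : 'M[R]_(m, n)) : R :=
  sup [set vnorm2 (A *m v) | v in [set v : 'cV[R]_n | vnorm2 v <= 1]].

Definition avg_rate {R : realType} {n : nat} (s : nat -> 'cV[R]_n) (t : nat)
  : 'cV[R]_n := (t%:R)^-1 *: \sum_(tau < t) s tau.+1.

Definition avg_input {R : realType} {n : nat} (x : nat -> 'cV[R]_n) (t : nat)
  : 'cV[R]_n := (t.+1%:R)^-1 *: \sum_(tau < t.+1) x tau.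

(* Main.v *)
Require Import Defs.
From HB Require Import structures.
From mathcomp Require Import all_boot all_order all_algebra.
From mathcomp Require Import all_classical all_reals all_analysis.
From mathcomp Require Import ring lra zify.
Import Order.TTheory GRing.Theory Num.Theory.
Local Open Scope classical_set_scope.
Local Open Scope ring_scope.

Module Helpers.
Set Implicit Arguments. Unset Strict Implicit.


Section H.
Variable R : realType.

Lemma sqr_le_norm (x y : R) : `|x| <= `|y| -> x ^+ 2 <= y ^+ 2.
Proof.
move=> h; rewrite -[x ^+ 2]real_normK ?num_real // -[y ^+ 2]real_normK ?num_real //.
by apply: lerXn2r; rewrite ?nnegrE.
Qed.

Lemma sigma_lip (x y : R) : `|sigma x - sigma y| <= `|x - y|.
Proof.
rewrite /sigma.
case: (ltP 1 x) => h1; case: (ltP x 0) => h2; case: (ltP 1 y) => h3; case: (ltP y 0) => h4;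
case: (lerP 0 (x - y)) => hxy; rewrite ?(ger0_norm hxy) ?(ltr0_norm hxy);
first [ (rewrite ler_norml; apply/andP; split; lra) | lra ].
Qed.

Lemma sigma_01 (x : R) : 0 <= sigma x <= 1.
Proof. rewrite /sigma; case: (ltP 1 x) => h1; case: (ltP x 0) => h2; apply/andP; split; lra. Qed.
End H.



Section H.
Variable R : realType.
Variable n : nat.
Implicit Types u v : 'cV[R]_n.

Lemma sumsq_ge0 v : 0 <= \sum_(i < n) (v i 0) ^+ 2.
Proof. by apply: sumr_ge0 => i _; exact: sqr_ge0. Qed.

Lemma vnorm2_ge0 v : 0 <= vnorm2 v.
Proof. exact: sqrtr_ge0. Qed.

Lemma vnorm2_sq v : vnorm2 v ^+ 2 = \sum_(i < n) (v i 0) ^+ 2.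
Proof. by rewrite /vnorm2 sqr_sqrtr // sumsq_ge0. Qed.

Lemma coord_le v i : `|v i 0| <= vnorm2 v.
Proof.
rewrite -sqrtr_sqr /vnorm2 ler_sqrt ?sumsq_ge0 // (bigD1 i) //= lerDl.
by apply: sumr_ge0 => j _; exact: sqr_ge0.
Qed.

Lemma vnorm2_le_sum v : vnorm2 v <= \sum_(i < n) `|v i 0|.
Proof.
have h0 : 0 <= \sum_(i < n) `|v i 0| by apply: sumr_ge0 => i _.
rewrite -[X in _ <= X](ger0_norm h0) -sqrtr_sqr /vnorm2 ler_sqrt ?sqr_ge0 //.
rewrite expr2 mulr_suml; apply: ler_sum => i _.
rewrite (bigD1 i) //= mulrDr -(real_normK (num_real (v i 0))) expr2 lerDl.
by apply: mulr_ge0 => //; apply: sumr_ge0 => j _.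
Qed.

Lemma vnorm2Z (r : R) v : vnorm2 (r *: v) = `|r| * vnorm2 v.
Proof.
rewrite /vnorm2 -sqrtr_sqr -sqrtrM ?sqr_ge0 // mulr_sumr.
by congr Num.sqrt; apply: eq_bigr => i _; rewrite mxE exprMn.
Qed.

Lemma vnorm2_eq0 v : vnorm2 v = 0 -> v = 0.
Proof.
move=> h; apply/matrixP => i j; rewrite (ord1 j) mxE; apply/normr0_eq0.
by apply/le_anti; rewrite normr_ge0 andbT -h coord_le.
Qed.

Lemma vnorm2_0 : vnorm2 (0 : 'cV[R]_n) = 0.
Proof. by rewrite /vnorm2 big1 ?sqrtr0 // => i _; rewrite mxE expr0n. Qed.

Lemma cauchy_schwarz u v :
  \sum_(i < n) u i 0 * v i 0 <= vnorm2 u * vnorm2 v.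
Proof.
set A := \sum_(i < n) (u i 0) ^+ 2; set B := \sum_(i < n) (v i 0) ^+ 2.
set C := \sum_(i < n) u i 0 * v i 0.
have A0 : 0 <= A by apply: sumsq_ge0.
have B0 : 0 <= B by apply: sumsq_ge0.
suff hC : C ^+ 2 <= A * B.
  apply: le_trans (ler_norm C) _.
  by rewrite -sqrtr_sqr /vnorm2 -/A -/B -sqrtrM // ler_sqrt // mulr_ge0.
have [Az|Apos] := eqVneq A 0.
  have ui : forall i, u i 0 = 0.
    move=> i; apply/eqP; rewrite -sqrf_eq0; apply/eqP.
    by apply: (psumr_eq0P _ Az) => // j _; exact: sqr_ge0.
  rewrite /C big1 ?expr0n ?mulr_ge0 // => i _; by rewrite ui mul0r.
have Ap : 0 < A by rewrite lt_def Apos A0.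
have e : \sum_(i < n) (C * u i 0 - A * v i 0) ^+ 2 = A * (A * B - C ^+ 2).
  transitivity (\sum_(i < n) (C ^+ 2 * (u i 0) ^+ 2 - (2 * C * A) * (u i 0 * v i 0)
                             + A ^+ 2 * (v i 0) ^+ 2)).
    by apply: eq_bigr => i _; ring.
  rewrite big_split /= sumrB -!mulr_sumr -/A -/B -/C; ring.
have : 0 <= A * (A * B - C ^+ 2).
  by rewrite -e; apply: sumr_ge0 => i _; exact: sqr_ge0.
rewrite pmulr_rge0 // subr_ge0 //.
Qed.

Lemma vnorm2D u v : vnorm2 (u + v) <= vnorm2 u + vnorm2 v.
Proof.
have h0 : 0 <= vnorm2 u + vnorm2 v by rewrite addr_ge0 ?vnorm2_ge0.
rewrite -[X in _ <= X](ger0_norm h0) -sqrtr_sqr /vnorm2 ler_sqrt ?sqr_ge0 //.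
have cs := cauchy_schwarz u v.
rewrite -/(vnorm2 u) -/(vnorm2 v) sqrrD !vnorm2_sq.
have -> : \sum_(i < n) ((u + v) i 0) ^+ 2 =
   \sum_(i < n) (u i 0) ^+ 2 + \sum_(i < n) (u i 0 * v i 0) *+ 2 + \sum_(i < n) (v i 0) ^+ 2.
  rewrite -!big_split /=; apply: eq_bigr => i _; rewrite mxE; ring.
rewrite sumrMnl.
by rewrite lerD2r lerD2l lerMn2r /=.
Qed.

Lemma vnorm2B u v : vnorm2 (u - v) <= vnorm2 u + vnorm2 v.
Proof.
apply: le_trans (vnorm2D _ _) _.
by rewrite -scaleN1r vnorm2Z normrN normr1 mul1r.
Qed.

Lemma vnorm2_tri u v w : vnorm2 (u - w) <= vnorm2 (u - v) + vnorm2 (v - w).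
Proof. have -> : u - w = (u - v) + (v - w) by rewrite addrA subrK. exact: vnorm2D. Qed.

Lemma vnorm2_sym u v : vnorm2 (u - v) = vnorm2 (v - u).
Proof. by rewrite -opprB -scaleN1r vnorm2Z normrN normr1 mul1r. Qed.

End H.

Section H2.
Variable R : realType.
Variable n : nat.
Implicit Types u v : 'cV[R]_n.
Lemma vnorm2N v : vnorm2 (- v) = vnorm2 v.
Proof. by rewrite -scaleN1r vnorm2Z normrN normr1 mul1r. Qed.

Lemma vnorm2_le_c v (c : R) : (forall i, `|v i 0| <= c) -> vnorm2 v <= n%:R * c.
Proof.
move=> h; apply: le_trans (vnorm2_le_sum _) _.
have -> : n%:R * c = \sum_(i < n) c by rewrite sumr_const card_ord mulr_natl.
by apply: ler_sum => i _.
Qed.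
End H2.

Lemma coordB (R : realType) n (u v : 'cV[R]_n) i : `|u i 0 - v i 0| <= vnorm2 (u - v).
Proof. by have := coord_le (u - v) i; rewrite !mxE. Qed.

Lemma entryB (R : realType) p q (u v : 'M[R]_(p, q)) i j : (u - v) i j = u i j - v i j.
Proof. by rewrite !mxE. Qed.



Section H.
Variable R : realType.
Variables p q : nat.
Variable A : 'M[R]_(p, q).

Lemma spec_ub : has_ubound [set vnorm2 (A *m v) | v in [set v : 'cV[R]_q | vnorm2 v <= 1]].
Proof.
exists (\sum_(i < p) \sum_(j < q) `|A i j|) => y [v /= hv <-].
apply: le_trans (vnorm2_le_sum _) _; apply: ler_sum => i _; rewrite mxE.
apply: le_trans (ler_norm_sum _ _ _) _; apply: ler_sum => j _.
rewrite normrM ler_piMr //; apply: le_trans (coord_le _ _) hv.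
Qed.

Lemma spec_in (v : 'cV[R]_q) : vnorm2 v <= 1 -> vnorm2 (A *m v) <= spec_norm A.
Proof. move=> hv; apply: (ub_le_sup spec_ub); by exists v. Qed.

Lemma spec_norm_ge0 : 0 <= spec_norm A.
Proof.
apply: le_trans (spec_in (v := 0) _); first by rewrite mulmx0 vnorm2_0.
by rewrite vnorm2_0.
Qed.

Lemma spec_bound (v : 'cV[R]_q) : vnorm2 (A *m v) <= spec_norm A * vnorm2 v.
Proof.
have [hz|hnz] := eqVneq (vnorm2 v) 0.
  by rewrite hz mulr0 (vnorm2_eq0 hz) mulmx0 vnorm2_0.
have np : 0 < vnorm2 v by rewrite lt_def hnz vnorm2_ge0.
have hw : vnorm2 ((vnorm2 v)^-1 *: v) <= 1.
  by rewrite vnorm2Z ger0_norm ?invr_ge0 ?vnorm2_ge0 // mulVf.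
have := spec_in hw; rewrite -scalemxAr vnorm2Z ger0_norm ?invr_ge0 ?vnorm2_ge0 //.
have hw1 : vnorm2 v * (vnorm2 v)^-1 = 1 by rewrite mulfV.
move=> h.
have -> : vnorm2 (A *m v) = vnorm2 v * ((vnorm2 v)^-1 * vnorm2 (A *m v)) by rewrite mulrA hw1 mul1r.
by rewrite mulrC ler_wpM2r // ltW.
Qed.
End H.



Section H.
Variable R : realType.

Lemma map_sigma_le n (a b : 'cV[R]_n) :
  vnorm2 (map_mx sigma a - map_mx sigma b) <= vnorm2 (a - b).
Proof.
rewrite /vnorm2 ler_sqrt ?sumsq_ge0 //; apply: ler_sum => i _; rewrite !mxE.
by apply: sqr_le_norm; exact: sigma_lip.
Qed.

Lemma map_sigma_bound n (a : 'cV[R]_n) : vnorm2 (map_mx sigma a) <= n%:R.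
Proof.
apply: le_trans (vnorm2_le_sum _) _.
have -> : n%:R = \sum_(i < n) (1:R) by rewrite sumr_const card_ord.
apply: ler_sum => i _; rewrite mxE.
by have /andP[h0 h1] := sigma_01 (a i 0); rewrite ger0_norm.
Qed.

Lemma lip p q (V : R) (A : 'M[R]_(p, q)) a a' e e' : 0 < V ->
  vnorm2 (map_mx sigma (V^-1 *: (A *m a + e)) - map_mx sigma (V^-1 *: (A *m a' + e')))
  <= V^-1 * (spec_norm A * vnorm2 (a - a') + vnorm2 (e - e')).
Proof.
move=> V0; apply: le_trans (map_sigma_le _ _) _.
rewrite -scalerBr vnorm2Z ger0_norm; last by rewrite invr_ge0 ltW.
rewrite ler_pM2l ?invr_gt0 //.
rewrite opprD addrACA -mulmxBr; apply: le_trans (vnorm2D _ _) _.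
by rewrite lerD2r spec_bound.
Qed.

Definition null (u : nat -> R) :=
  forall e, 0 < e -> exists T, forall t, (T <= t)%N -> `|u t| <= e.

Lemma null_le (u v : nat -> R) : (forall t, `|v t| <= u t) -> null u -> null v.
Proof.
move=> h hu e e0; have [T hT] := hu e e0; exists T => t ht.
by apply: le_trans (h t) _; apply: le_trans (ler_norm _) (hT t ht).
Qed.

Lemma null_le_abs (u v : nat -> R) : (forall t, `|v t| <= `|u t|) -> null u -> null v.
Proof.
move=> h hu e e0; have [T hT] := hu e e0; exists T => t ht.
by apply: le_trans (h t) (hT t ht).
Qed.

Lemma null_add (u v : nat -> R) : null u -> null v -> null (fun t => u t + v t).
Proof.
move=> hu hv e e0; have e2 : 0 < e / 2 by rewrite divr_gt0.
have [T1 h1] := hu _ e2; have [T2 h2] := hv _ e2.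
exists (maxn T1 T2) => t ht.
have ht1 : (T1 <= t)%N by lia.
have ht2 : (T2 <= t)%N by lia.
apply: le_trans (ler_normD _ _) _.
have := h1 t ht1; have := h2 t ht2; lra.
Qed.

Lemma null_scale (k : R) (u : nat -> R) : null u -> null (fun t => k * u t).
Proof.
move=> hu e e0; have e2 : 0 < e / (`|k| + 1) by rewrite divr_gt0 // ltr_wpDl.
have [T hT] := hu _ e2; exists T => t ht; rewrite normrM.
apply: le_trans (ler_wpM2l (normr_ge0 k) (hT t ht)) _.
rewrite mulrA ler_pdivrMr ?ltr_wpDl // mulrDr mulr1 mulrC lerDl; exact: ltW.
Qed.

Lemma null_shift (u : nat -> R) : null u -> null (fun t => u t.+1).
Proof. move=> hu e e0; have [T hT] := hu e e0; exists T => t ht; apply: hT; lia. Qed.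

Lemma null_unshift (u : nat -> R) : null (fun t => u t.+1) -> null u.
Proof.
move=> hu e e0; have [T hT] := hu e e0; exists T.+1 => t ht.
have -> : t = t.-1.+1 by lia.
apply: hT; lia.
Qed.

Lemma null_inv (C : R) : null (fun t => C / t.+1%:R).
Proof.
move=> e e0; exists (Num.truncn (`|C| / e)) => t ht.
rewrite normrM normfV [`|t.+1%:R|]ger0_norm // ler_pdivrMr ?ltr0Sn //.
have h1 := truncnS_gt (`|C| / e).
have h2 : ((Num.truncn (`|C| / e)).+1%:R <= t.+1%:R :> R) by rewrite ler_nat.
have h3 : `|C| / e < t.+1%:R by apply: lt_le_trans h1 h2.
by move: h3; rewrite ltr_pdivrMr // mulrC => /ltW.
Qed.

Lemma null_sum k (f : 'I_k -> nat -> R) :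
  (forall i, null (f i)) -> null (fun t => \sum_(i < k) f i t).
Proof.
elim: k f => [|k IH] f hf.
  by move=> e e0; exists 0%N => t _; rewrite big_ord0 normr0 ltW.
have := null_add (IH (fun i => f (widen_ord (leqnSn k) i)) (fun i => hf _)) (hf ord_max).
by apply: null_le_abs => t; rewrite big_ord_recr /=.
Qed.

Lemma null_const (c : R) : null (fun _ => c) -> c = 0.
Proof.
move=> h; apply/normr0_eq0/le_anti; rewrite normr_ge0 andbT.
apply/ler_addgt0Pr => e e0; rewrite add0r; have [T hT] := h e e0; exact: hT T (leqnn T).
Qed.

Lemma cvg_null (u : nat -> R) (l : R) : u @ \oo --> (l : R^o) -> null (fun t => l - u t).
Proof.
move/cvgrPdist_le => h e e0; have [T _ hT] := h e e0; exists T => t ht; exact: hT.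
Qed.

Lemma null_cvg (u : nat -> R) (l : R) : null (fun t => l - u t) -> u @ \oo --> (l : R^o).
Proof.
move=> h; apply/cvgrPdist_le => e e0; have [T hT] := h e e0; exists T => // t ht; exact: hT.
Qed.

Lemma null_geom (L : R) : 0 <= L < 1 -> null (fun j => L ^+ j).
Proof.
move=> /andP[L0 L1]; have : `|L| < 1 by rewrite ger0_norm.
move/cvg_expr/cvg_null; apply: null_le_abs => t; by rewrite sub0r normrN.
Qed.

Lemma twoidx (D : nat -> nat -> R) (L B : R) (del : nat -> R) :
  0 <= L < 1 -> (forall t s, 0 <= D t s <= B) -> null del -> (forall t, 0 <= del t) ->
  (forall t s, D t.+1 s.+1 <= L * D t s + del t + del s) ->
  forall e, 0 < e -> exists T, forall t s, (T <= t)%N -> (T <= s)%N -> D t s <= e.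
Proof.
move=> /andP[L0 L1] hD hdel del0 hrec e e0.
pose eta := e * (1 - L) / 4.
have eta0 : 0 < eta by rewrite /eta divr_gt0 // mulr_gt0 // subr_gt0.
have [M hM] := hdel _ eta0.
have claim : forall j t s, (M <= t)%N -> (M <= s)%N -> D (t + j)%N (s + j)%N <= L ^+ j * B + e / 2.
  elim=> [|j IH] t s ht hs.
    rewrite !addn0 expr0 mul1r; have /andP[_ h] := hD t s; lra.
  rewrite !addnS; apply: le_trans (hrec _ _) _.
  have d1 : del (t + j)%N <= eta by apply: le_trans (ler_norm _) (hM _ _); lia.
  have d2 : del (s + j)%N <= eta by apply: le_trans (ler_norm _) (hM _ _); lia.
  have := ler_wpM2l L0 (IH t s ht hs).
  have -> : L * (L ^+ j * B + e / 2) = L ^+ j.+1 * B + L * e / 2 by rewrite exprS; ring.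
  move: d1 d2; rewrite /eta => d1 d2 h3.
  have : L * e / 2 + e * (1 - L) / 4 + e * (1 - L) / 4 = e / 2 by field.
  lra.
have hB : 0 <= B by have /andP[h1 h2] := hD 0%N 0%N; lra.
have e2 : 0 < e / 2 by rewrite divr_gt0.
have [J hJ] := null_scale B (null_geom (L := L) (introT andP (conj L0 L1))) e2.
exists (M + J)%N => t s ht hs.
pose j := (minn t s - M)%N.
have -> : t = ((t - j) + j)%N by rewrite subnK //; rewrite /j; lia.
have -> : s = ((s - j) + j)%N by rewrite subnK //; rewrite /j; lia.
apply: le_trans (claim _ _ _ _ _) _; rewrite /j; try lia.
have := hJ (minn t s - M)%N ltac:(lia).
rewrite mulrC => h; have := ler_norm (L ^+ (minn t s - M) * B); lra.
Qed.
End H.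

End Helpers.
Import Helpers.

Theorem theorem3 (R : realType) (N : nat) (d : nat -> nat) (m : nat)
  (Vth : R) (F1 : 'M[R]_(d 0, m)) (W1 : 'M[R]_(d 0, d N.-1))
  (F : forall k : nat, 'M[R]_(d k.+1, d k)) (b : forall k : nat, 'cV[R]_(d k))
  (x : nat -> 'cV[R]_m)
  (u s up : forall k : nat, nat -> 'cV[R]_(d k))
  (xstar : 'cV[R]_m) (c gamma : R) :
  (2 <= N)%N -> 0 < Vth ->
  (forall k, u k 0%N = 0) -> (forall k, s k 0%N = 0) ->
  (forall t : nat,
     let pre := u 0%N t + W1 *m s N.-1 t + F1 *m x t + b 0%N in
     s 0%N t.+1 = map_mx heaviside (pre - const_mx Vth) /\
     u 0%N t.+1 = pre - Vth *: s 0%N t.+1) ->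
  (forall (k t : nat), (k.+1 < N)%N ->
     let pre := u k.+1 t + F k *m s k t.+1 + b k.+1 in
     s k.+1 t.+1 = map_mx heaviside (pre - const_mx Vth) /\
     u k.+1 t.+1 = pre - Vth *: s k.+1 t.+1) ->
  (forall t : nat,
     avg_rate (s 0%N) t.+1 =
       map_mx sigma (Vth^-1 *: ((t%:R / t.+1%:R) *: (W1 *m avg_rate (s N.-1) t)
                               + F1 *m avg_input x t + b 0%N
                               - (t.+1%:R)^-1 *: up 0%N t.+1))) ->
  (forall (k t : nat), (k.+1 < N)%N ->
     avg_rate (s k.+1) t.+1 =
       map_mx sigma (Vth^-1 *: (F k *m avg_rate (s k) t.+1 + b k.+1
                               - (t.+1%:R)^-1 *: up k.+1 t.+1))) ->
  (forall i, (fun t : nat => avg_input x t i 0) @ \oo --> (xstar i 0 : R^o)) ->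
  (forall (k t : nat) (i : 'I_(d k)), (k < N)%N -> `|up k t i 0| <= c) ->
  gamma < 1 ->
  spec_norm W1 * \prod_(k < N.-1) spec_norm (F k) <= gamma * Vth ^+ N ->
  exists astar : forall k : nat, 'cV[R]_(d k),
    astar 0%N = map_mx sigma (Vth^-1 *: (W1 *m astar N.-1 + F1 *m xstar + b 0%N)) /\
    (forall k, (k.+1 < N)%N ->
       astar k.+1 = map_mx sigma (Vth^-1 *: (F k *m astar k + b k.+1))) /\
    (forall k, (k < N)%N -> forall i : 'I_(d k),
       (fun t : nat => avg_rate (s k) t i 0) @ \oo --> (astar k i 0 : R^o)).
Proof.
move=> N2 V0 _ _ _ _ R1 R2 hx hup g1 hprod.
case: N N2 W1 R1 R2 hup hprod => [|[|n]] //= _ W1 R1 R2 hup hprod.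
pose a k t := avg_rate (s k) t.
pose Phi p q (A : 'M[R]_(p, q)) (e : 'cV[R]_p) (y : 'cV[R]_q) :=
  map_mx sigma (Vth^-1 *: (A *m y + e)).
pose E0 t := (t%:R / t.+1%:R) *: (W1 *m a n.+1 t) + F1 *m avg_input x t + b 0%N
             - (t.+1%:R)^-1 *: up 0%N t.+1 - W1 *m a n.+1 t.
pose e0 := F1 *m xstar + b 0%N.
pose Ek k t := b k.+1 - (t.+1%:R)^-1 *: up k.+1 t.+1.
have R1' : forall t, a 0%N t.+1 = Phi _ _ W1 (E0 t) (a n.+1 t).
  by move=> t; rewrite /a R1 /Phi /E0 [W1 *m _ + _]addrC subrK.
have R2' : forall k t, (k < n.+1)%N -> a k.+1 t.+1 = Phi _ _ (F k) (Ek k t) (a k t.+1).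
  by move=> k t hk; rewrite /a R2 // /Phi /Ek addrA.
have al0 : 0 < Vth^-1 by rewrite invr_gt0.
have hbnd : forall k t, (k < n.+2)%N -> vnorm2 (a k t) <= (d k)%:R.
  move=> k [|t] hk.
    by rewrite /a /avg_rate big_ord0 scaler0 vnorm2_0.
  case: k hk => [|k] hk; first by rewrite R1' map_sigma_bound.
  by rewrite R2' // map_sigma_bound.
have foo : forall t : nat, t%:R / t.+1%:R = 1 - (t.+1%:R)^-1 :> R.
  move=> t; have hne : t%:R + 1 != 0 :> R by rewrite natr1 pnatr_eq0.
  by rewrite -natr1; field.
have SW0 := spec_norm_ge0 W1; have SF0 := spec_norm_ge0 F1.
have nE0 : null (fun t => vnorm2 (E0 t - e0)).
  pose K := spec_norm W1 * (d n.+1)%:R + (d 0%N)%:R * c.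
  apply: (null_le (u := fun t => K / t.+1%:R + spec_norm F1 *
                     \sum_(i < m) `|(avg_input x t - xstar) i 0|)).
    move=> t /=; rewrite ger0_norm ?vnorm2_ge0 //.
    have -> : E0 t - e0 = - ((t.+1%:R)^-1 *: (W1 *m a n.+1 t))
        + F1 *m (avg_input x t - xstar) - (t.+1%:R)^-1 *: up 0%N t.+1.
      rewrite /E0 /e0 foo scalerBl scale1r mulmxBr; apply/matrixP => i j; rewrite !mxE; ring.
    apply: le_trans (vnorm2B _ _) _; apply: le_trans (lerD (vnorm2D _ _) (lexx _)) _.
    have r0 : 0 <= (t.+1%:R : R)^-1 by rewrite invr_ge0.
    rewrite vnorm2N !vnorm2Z ger0_norm //.
    have h1 := spec_bound W1 (a n.+1 t); have h2 := hbnd n.+1 t (ltnSn _).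
    have h3 := spec_bound F1 (avg_input x t - xstar).
    have h4 := vnorm2_le_sum (avg_input x t - xstar).
    have h5 : vnorm2 (up 0%N t.+1) <= (d 0%N)%:R * c by apply: vnorm2_le_c => i; exact: hup.
    have g1' := ler_wpM2l r0 (le_trans h1 (ler_wpM2l SW0 h2)).
    have g2 := le_trans h3 (ler_wpM2l SF0 h4).
    have g3 := ler_wpM2l r0 h5.
    have -> : K / t.+1%:R = (t.+1%:R)^-1 * (spec_norm W1 * (d n.+1)%:R) + (t.+1%:R)^-1 * ((d 0%N)%:R * c).
      by rewrite /K mulrC mulrDr.
    by rewrite [X in _ <= X]addrAC; apply: lerD => //; apply: lerD.
  apply: null_add; first exact: null_inv.
  apply: null_scale; apply: null_sum => i.
  apply: null_le_abs (cvg_null (hx i)) => t; by rewrite !mxE normr_id distrC.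
have nEk : forall k, (k < n.+1)%N -> null (fun t => vnorm2 (Ek k t - b k.+1)).
  move=> k hk; apply: (null_le (u := fun t => ((d k.+1)%:R * c) / t.+1%:R)); last exact: null_inv.
  move=> t /=; rewrite ger0_norm ?vnorm2_ge0 // /Ek addrAC subrr add0r vnorm2N vnorm2Z.
  rewrite ger0_norm ?invr_ge0 // mulrC ler_pM2r ?invr_gt0 ?ltr0Sn //.
  by apply: vnorm2_le_c => i; apply: hup; lia.
pose P k := \prod_(j < k) (spec_norm (F j) / Vth).
have P0 : forall k, 0 <= P k.
  by move=> k; apply: prodr_ge0 => j _; rewrite divr_ge0 ?spec_norm_ge0 ?ltW.
have PS : forall k, P k.+1 = P k * (spec_norm (F k) / Vth) by move=> k; rewrite /P big_ord_recr.
have null0 : null (fun _ : nat => 0 : R) by move=> ee ee0; exists 0%N => t _; rewrite normr0 ltW.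
have chain : forall k, (k < n.+2)%N -> exists del : nat -> R, [/\ null del, (forall t, 0 <= del t) &
   forall t s', vnorm2 (a k t.+1 - a k s'.+1) <=
      P k * vnorm2 (a 0%N t.+1 - a 0%N s'.+1) + del t + del s'].
  elim=> [|k IH] hk.
    exists (fun _ => 0); split => // t s'; by rewrite /P big_ord0 mul1r !addr0.
  have [del [hn h0 hD]] := IH (ltnW hk).
  exists (fun t => Vth^-1 * (spec_norm (F k) * del t + vnorm2 (Ek k t - b k.+1))); split.
  - by apply: null_scale; apply: null_add; [exact: null_scale | exact: nEk].
  - move=> t; apply: mulr_ge0; first exact: ltW.
    by apply: addr_ge0; [apply: mulr_ge0 => //; exact: spec_norm_ge0 | exact: vnorm2_ge0].
  - move=> t s'; rewrite !R2' // /Phi.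
apply: le_trans (lip (F k) (a k t.+1) (a k s'.+1) (Ek k t) (Ek k s') V0) _.
    have hE : vnorm2 (Ek k t - Ek k s') <= vnorm2 (Ek k t - b k.+1) + vnorm2 (Ek k s' - b k.+1).
      by rewrite [vnorm2 (Ek k s' - _)]vnorm2_sym; apply: vnorm2_tri.
    have SF := spec_norm_ge0 (F k).
    apply: le_trans (ler_wpM2l (ltW al0) (lerD (ler_wpM2l SF (hD t s')) hE)) _.
    rewrite PS le_eqVlt; apply/orP; left; apply/eqP; ring.
have [del [hn h0 hD]] := chain n.+1 (ltnSn _).
pose L := Vth^-1 * spec_norm W1 * P n.+1.
have hP : P n.+1 = (\prod_(j < n.+1) spec_norm (F j)) / Vth ^+ n.+1.
  by rewrite /P big_split /= prodr_const card_ord exprVn.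
have L0 : 0 <= L by rewrite /L !mulr_ge0 // ltW.
have LV : L * Vth ^+ n.+2 = spec_norm W1 * \prod_(j < n.+1) spec_norm (F j).
  have Vn : Vth != 0 by rewrite gt_eqF.
  have Xn : Vth ^+ n.+1 != 0 by rewrite expf_neq0.
  rewrite /L hP (exprS Vth n.+1); move: Xn; set X := Vth ^+ n.+1; set Q := \prod_(j < n.+1) _ => Xn.
  by field; rewrite Xn Vn.
have Lg : L <= gamma by rewrite -(ler_pM2r (exprn_gt0 n.+2 V0)) LV.
have L1 : 0 <= L < 1 by apply/andP; split => //; exact: le_lt_trans Lg g1.
pose D t s' := vnorm2 (a 0%N t.+1 - a 0%N s'.+1).
pose del' t := Vth^-1 * (spec_norm W1 * del t + vnorm2 (E0 t.+1 - e0)).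
have Drec : forall t s', D t.+1 s'.+1 <= L * D t s' + del' t + del' s'.
  move=> t s'; rewrite /D [a 0%N t.+2]R1' [a 0%N s'.+2]R1'.
  apply: le_trans (lip W1 (a n.+1 t.+1) (a n.+1 s'.+1) (E0 t.+1) (E0 s'.+1) V0) _.
  have hE : vnorm2 (E0 t.+1 - E0 s'.+1) <= vnorm2 (E0 t.+1 - e0) + vnorm2 (E0 s'.+1 - e0).
    by rewrite [vnorm2 (E0 s'.+1 - _)]vnorm2_sym; apply: vnorm2_tri.
  apply: le_trans (ler_wpM2l (ltW al0) (lerD (ler_wpM2l SW0 (hD t s')) hE)) _.
  rewrite /L /del' le_eqVlt; apply/orP; left; apply/eqP; ring.
have Dbnd : forall t s', 0 <= D t s' <= 2 * (d 0%N)%:R.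
  move=> t s'; rewrite vnorm2_ge0 /=; apply: le_trans (vnorm2B _ _) _.
  have := hbnd 0%N t.+1 isT; have := hbnd 0%N s'.+1 isT; lra.
have ndel' : null del'.
  by apply: null_scale; apply: null_add; [exact: null_scale | exact: null_shift nE0].
have del'0 : forall t, 0 <= del' t.
  move=> t; apply: mulr_ge0; first exact: ltW.
  by apply: addr_ge0; [exact: mulr_ge0 | exact: vnorm2_ge0].
have cD := twoidx L1 Dbnd ndel' del'0 Drec.
pose ell := fun i : 'I_(d 0%N) => lim ((fun t => a 0%N t.+1 i 0 : R^o) @ \oo).
have cv : forall i, (fun t => a 0%N t.+1 i 0) @ \oo --> (ell i : R^o).
  move=> i; apply: cauchy_cvg; apply: cauchy_exP => ee ee0.
  have [T hT] := cD _ (divr_gt0 ee0 (ltr0Sn _ 1)).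
  exists (a 0%N T.+1 i 0); rewrite /fmapE -ball_normE /ball_; exists T => // t ht.
  have h := coordB (a 0%N T.+1) (a 0%N t.+1) i.
  have := hT T t (leqnn T) ht; rewrite /D /= => h2.
  have : ee / 2 < ee by rewrite ltr_pdivrMr // ltr_pMr // ltr1n.
  move: h h2; set A := vnorm2 _; set B := `|_|; lra.
pose ast := fix ast (k : nat) : 'cV[R]_(d k) :=
  match k return 'cV[R]_(d k) with
  | 0%N => \col_(i < d 0%N) ell i
  | k'.+1 => Phi _ _ (F k') (b k'.+1) (ast k')
  end.
have conv : forall k, (k < n.+2)%N -> null (fun t => vnorm2 (a k t - ast k)).
  elim=> [|k IH] hk.
    apply: null_unshift.
    apply: (null_le (u := fun t => \sum_(i < d 0%N) `|(a 0%N t.+1 - ast 0%N) i 0|)).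
      by move=> t /=; rewrite ger0_norm ?vnorm2_ge0 // vnorm2_le_sum.
    apply: null_sum => i; apply: null_le_abs (cvg_null (cv i)) => t.
    rewrite entryB normr_id distrC; have -> : ast 0%N i 0 = ell i by rewrite /= mxE.
    by [].
  apply: null_unshift.
  apply: (null_le (u := fun t => Vth^-1 * (spec_norm (F k) * vnorm2 (a k t.+1 - ast k)
                                      + vnorm2 (Ek k t - b k.+1)))).
    move=> t /=; rewrite ger0_norm ?vnorm2_ge0 // R2' //.
    exact: (lip (F k) (a k t.+1) (ast k) (Ek k t) (b k.+1) V0).
  apply: null_scale; apply: null_add; last exact: nEk.
  by apply: null_scale; exact: (null_shift (IH (ltnW hk))).
have fix0 : ast 0%N = Phi _ _ W1 e0 (ast n.+1).
  apply/eqP; rewrite -subr_eq0; apply/eqP; apply: vnorm2_eq0; apply: null_const.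
  have c0 := conv 0%N isT; have cN := conv n.+1 (ltnSn _).
  apply: (null_le (u := fun t => vnorm2 (a 0%N t.+1 - ast 0%N) + Vth^-1 *
        (spec_norm W1 * vnorm2 (a n.+1 t - ast n.+1) + vnorm2 (E0 t - e0)))).
    move=> t /=; rewrite ger0_norm ?vnorm2_ge0 //.
    apply: le_trans (vnorm2_tri _ (a 0%N t.+1) _) _; rewrite vnorm2_sym; apply: lerD => //.
    rewrite R1'; exact: (lip W1 (a n.+1 t) (ast n.+1) (E0 t) e0 V0).
  apply: null_add; first exact: (null_shift c0).
  by apply: null_scale; apply: null_add; [exact: null_scale | exact: nE0].
exists ast; split; [|split].
- by rewrite {1}fix0 /Phi /e0 addrA.
- by [].
- move=> k hk i; apply: null_cvg; apply: null_le_abs (conv k hk) => t.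
  rewrite [`|vnorm2 _|]ger0_norm ?vnorm2_ge0 // distrC.
  exact: (coordB (a k t) (ast k) i).
Qed.
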